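(* Let $n\ge2$, $A_0,\dots,A_{n-1}\in\mathbb{R}$, $A_n=1$, $F(a)=\sum_{k=0}^nA_ka^k$. Let $x(a)$ be a smooth function on an open interval $I\subset(0,\infty)$ with $\dot x\neq 0$, and on $I\times\mathbb{R}$ let $H=\Pi^2+aP_y^2$, $\Pi=\frac{a}{\dot x}P_a$, $G=\sum_{k=0}^nA_kH^kP_y^{2(n-k)}$. Let $$Q_1=\sum_{k=1}^n b_k(a)\,\Pi^{2k-1}P_y^{2(n-k)+1}$$ with smooth functions $b_k$ of $a$, and $S_1=Q_1+yG$. Then $\{H,S_1\}=0$ if and only if, for every $k\in\{1,\dots,n\}$, $$b_k=\sum_{s=1}^k\frac{F^{(k-s)}}{(k-s)!}\,\frac{D_a^s x}{(1/2)_s}=\mathrm{Op}_k[F]x-\frac{F^{(k)}}{k!}\,x,$$ and $x$, after adding a suitable constant (which does not change $H$), satisfies the linear homogeneous ODE of order $n$ $$\mathrm{Op}_n[F]\,x=0 .$$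
   Context: $D_a=d/da$, $F^{(m)}=D_a^mF$, a dot denotes $d/da$; $\{\cdot,\cdot\}$ is the canonical Poisson bracket with $(P_a,P_y)$ conjugate to $(a,y)$. Pochhammer symbol: $(z)_0=1$, $(z)_s=z(z+1)\cdots(z+s-1)$. For a polynomial $F$ and integer $m\ge0$, the linear differential operator $\mathrm{Op}_m[F]=\sum_{s=0}^m\frac{F^{(m-s)}}{(m-s)!}\frac{1}{(1/2)_s}D_a^s$. *)

(* Defs.v *)
From Stdlib Require Import Reals Factorial.
From Coquelicot Require Import Coquelicot.
Open Scope R_scope.

Fixpoint poch (z : R) (s : nat) : R :=
  match s with
  | O => 1
  | S s' => poch z s' * (z + INR s')
  end.

Definition inI (l : R) (r : Rbar) (a : R) : Prop := l < a /\ Rbar_lt (Finite a) r.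

Definition Fpoly (A : nat -> R) (n : nat) (a : R) : R :=
  sum_f_R0 (fun k => A k * a ^ k) n.

Definition Op (m : nat) (F : R -> R) (g : R -> R) (a : R) : R :=
  sum_f_R0 (fun s => Derive_n F (m - s) a / INR (fact (m - s))
                      * / poch (1/2) s * Derive_n g s a) m.

(* Phase-space functions of (a, y, P_a, P_y). *)
Definition PhaseFun := R -> R -> R -> R -> R.

Definition pbracket (f g : PhaseFun) (a y pa py : R) : R :=
    Derive (fun t => f t y pa py) a * Derive (fun t => g a y t py) pa
  - Derive (fun t => f a y t py) pa * Derive (fun t => g t y pa py) a
  + Derive (fun t => f a t pa py) y * Derive (fun t => g a y pa t) py
  - Derive (fun t => f a y pa t) py * Derive (fun t => g a t pa py) y.

Definition Pi (x : R -> R) (a pa : R) : R := a / Derive x a * pa.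

Definition Ham (x : R -> R) : PhaseFun :=
  fun a y pa py => (Pi x a pa) ^ 2 + a * py ^ 2.

Definition Gfun (A : nat -> R) (n : nat) (x : R -> R) : PhaseFun :=
  fun a y pa py => sum_f_R0 (fun k => A k * (Ham x a y pa py) ^ k * py ^ (2 * (n - k))) n.

(* Q_1 = sum_{k=1}^n b_k(a) Pi^{2k-1} P_y^{2(n-k)+1}  (index j = k-1) *)
Definition Q1 (b : nat -> R -> R) (n : nat) (x : R -> R) : PhaseFun :=
  fun a y pa py => sum_f_R0 (fun j =>
     b (S j) a * (Pi x a pa) ^ (2 * S j - 1) * py ^ (2 * (n - S j) + 1)) (n - 1).

Definition S1 (A : nat -> R) (b : nat -> R -> R) (n : nat) (x : R -> R) : PhaseFun :=
  fun a y pa py => Q1 b n x a y pa py + y * Gfun A n x a y pa py.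

(* Main.v *)
Require Import Defs.
From Stdlib Require Import Reals Factorial Lia Lra.
From Coquelicot Require Import Coquelicot.
Open Scope R_scope.

Lemma is_derive_sum (f : nat -> R -> R) (df : nat -> R) (N : nat) (x0 : R) :
  (forall k, (k <= N)%nat -> is_derive (f k) x0 (df k)) ->
  is_derive (fun t => sum_f_R0 (fun k => f k t) N) x0 (sum_f_R0 df N).
Proof.
  induction N as [|N IH]; intros H; simpl.
  - apply H; lia.
  - apply (is_derive_plus (fun t => sum_f_R0 (fun k => f k t) N) (f (S N))).
    + apply IH; intros; apply H; lia.
    + apply H; lia.
Qed.

Lemma loc_I l r a : inI l r a -> locally a (fun t => inI l r t).
Proof.
  intros H. unfold inI.
  apply (open_and (fun t : R => Rbar_lt (Finite l) t) (fun t : R => Rbar_lt t r)).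
  - apply open_Rbar_gt.
  - apply open_Rbar_lt.
  - exact H.
Qed.

Definition P (N : nat) (c : nat -> R) (t : R) := sum_f_R0 (fun k => c k * t ^ k) N.
Definition dcoef (c : nat -> R) (k : nat) := c (S k) * INR (S k).
Fixpoint diter (m : nat) (c : nat -> R) : nat -> R :=
  match m with O => c | S m' => dcoef (diter m' c) end.

Lemma P_is_derive0 N c t : is_derive (P N c) t (sum_f_R0 (fun k => c k * (INR k * t ^ (pred k))) N).
Proof.
  unfold P. apply (is_derive_sum (fun k t => c k * t ^ k)).
  intros k _. auto_derive; auto. ring.
Qed.



Lemma P_is_derive N c t : is_derive (P (S N) c) t (P N (dcoef c) t).
Proof.
  assert (E : sum_f_R0 (fun k => c k * (INR k * t ^ (pred k))) (S N) = P N (dcoef c) t).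
  { rewrite decomp_sum by lia. simpl pred. unfold P, dcoef.
    replace (c 0%nat * (INR 0 * t ^ 0)) with 0 by (simpl; ring). rewrite Rplus_0_l.
    apply sum_eq. intros i _. simpl pred. ring. }
  rewrite <- E. apply P_is_derive0.
Qed.

Lemma P0_const c t : P 0 c t = c 0%nat.
Proof. unfold P; simpl; ring. Qed.

Lemma Derive_n_P m N c t : Derive_n (P (m + N) c) m t = P N (diter m c) t.
Proof.
  revert N t. induction m as [|m IH]; intros N t.
  - reflexivity.
  - simpl Derive_n. replace (S (m + N))%nat with (m + S N)%nat by lia.
    rewrite (Derive_ext _ (P (S N) (diter m c))) by (intros; apply IH).
    apply is_derive_unique. apply P_is_derive.
Qed.

Lemma diter_val m c k : diter m c k = c (k + m)%nat * INR (fact (k + m)) / INR (fact k).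
Proof.
  revert k. induction m as [|m IH]; intros k.
  - simpl. rewrite Nat.add_0_r. field. apply INR_fact_neq_0.
  - simpl diter. unfold dcoef. rewrite IH.
    replace (S k + m)%nat with (k + S m)%nat by lia.
    change (fact (S k)) with (S k * fact k)%nat. rewrite mult_INR.
    field. split. apply INR_fact_neq_0. apply not_0_INR. lia.
Qed.

Lemma sum_zero_pow (g : nat -> R) M : sum_f_R0 (fun j => g j * 0 ^ j) M = g 0%nat.
Proof. induction M; simpl. ring. rewrite IHM. ring. Qed.


Lemma polyD_eq (N : nat) (c : nat -> R) m t : (m <= N)%nat -> Derive_n (P N c) m t = P (N - m) (diter m c) t.
Proof. intros H. replace N with (m + (N - m))%nat at 1 by lia. apply Derive_n_P. Qed.

Lemma polyD_ex (N : nat) (c : nat -> R) m t : (m <= N)%nat -> ex_derive (Derive_n (P N c) m) t.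
Proof.
  intros H. destruct (N - m)%nat as [|K] eqn:E.
  - exists 0. apply (is_derive_ext (fun _ => diter m c 0%nat)).
    + intros u. rewrite polyD_eq by lia. rewrite E. rewrite P0_const. reflexivity.
    + auto_derive; auto.
  - exists (P K (dcoef (diter m c)) t). apply (is_derive_ext (P (S K) (diter m c))).
    + intros u. rewrite polyD_eq by lia. rewrite E. reflexivity.
    + apply P_is_derive.
Qed.

Lemma polyD_exn (N : nat) (c : nat -> R) k t : (k <= S N)%nat -> ex_derive_n (P N c) k t.
Proof.
  destruct k as [|k]; intros H; simpl. exact I. apply polyD_ex; lia.
Qed.

Lemma polyD_top (N : nat) (c : nat -> R) t : Derive_n (P N c) N t = c N * INR (fact N).
Proof. rewrite polyD_eq by lia. rewrite Nat.sub_diag, P0_const, diter_val. simpl. field. Qed.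

Lemma polyD_over (N : nat) (c : nat -> R) t : Derive_n (P N c) (S N) t = 0.
Proof.
  simpl. rewrite (Derive_ext _ (fun _ => c N * INR (fact N))) by (intros; apply polyD_top).
  apply Derive_const.
Qed.

Lemma taylorP (N : nat) (c : nat -> R) a h : 0 <= h -> P N c (a + h) = sum_f_R0 (fun j => Derive_n (P N c) j a / INR (fact j) * h ^ j) N.
Proof.
  intros Hh. destruct Hh as [Hh|Hh].
  - destruct (Taylor_Lagrange (P N c) N a (a + h)) as [z [_ Hz]]. lra.
    intros; apply polyD_exn; lia.
    rewrite Hz, polyD_over. rewrite Rmult_0_r, Rplus_0_r.
    apply sum_eq; intros i _. replace (a + h - a) with h by ring. field. apply INR_fact_neq_0.
  - subst h. rewrite Rplus_0_r. rewrite sum_zero_pow. simpl. field.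
Qed.

Lemma pow_01 j t : 0 <= t <= 1 -> 0 <= t ^ j <= 1.
Proof. intros H. induction j; simpl. lra. nra. Qed.

Lemma sum_bound (d : nat -> R) N t : 0 <= t <= 1 ->
  Rabs (sum_f_R0 (fun j => d j * t ^ j) N) <= sum_f_R0 (fun j => Rabs (d j)) N.
Proof.
  intros Ht. induction N; simpl.
  - rewrite Rmult_1_r; lra.
  - eapply Rle_trans. apply Rabs_triang. apply Rplus_le_compat. exact IHN.
    rewrite Rabs_mult. pose proof (pow_01 (S N) t Ht). simpl in H.
    rewrite (Rabs_right (t * t ^ N)) by lra. pose proof (Rabs_pos (d (S N))). nra.
Qed.

Lemma poly_zero_pos N (c : nat -> R) :
  (forall t, 0 < t -> sum_f_R0 (fun j => c j * t ^ j) N = 0) -> forall j, (j <= N)%nat -> c j = 0.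
Proof.
  revert c. induction N as [|N IH]; intros c H j Hj.
  - assert (j = 0%nat) by lia. subst. specialize (H 1 Rlt_0_1). simpl in H. lra.
  - set (M := sum_f_R0 (fun j => Rabs (c (S j))) N).
    assert (HM : 0 <= M). { unfold M. clear. induction N; simpl. apply Rabs_pos. pose proof (Rabs_pos (c (S (S N)))). lra. }
    assert (Hdec : forall t, sum_f_R0 (fun j => c j * t ^ j) (S N) = c 0%nat + t * sum_f_R0 (fun j => c (S j) * t ^ j) N).
    { intros t. rewrite decomp_sum by lia. simpl pred. rewrite scal_sum. f_equal. simpl; ring.
      apply sum_eq. intros; simpl; ring. }
    assert (H0 : c 0%nat = 0).
    { destruct (Req_dec (c 0%nat) 0) as [E|E]; auto. exfalso.
      pose proof (Rabs_pos_lt _ E) as Ha.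
      set (t := Rmin 1 (Rabs (c 0%nat) / (2 * (M + 1)))).
      assert (Ht0 : 0 < t). { unfold t. apply Rmin_pos. lra. apply Rdiv_lt_0_compat; lra. }
      assert (Ht1 : t <= 1) by apply Rmin_l.
      assert (Ht2 : t <= Rabs (c 0%nat) / (2 * (M + 1))) by apply Rmin_r.
      pose proof (H t Ht0) as Hz. rewrite Hdec in Hz.
      pose proof (sum_bound (fun j => c (S j)) N t ltac:(lra)) as Hb. cbv beta in Hb; fold M in Hb.
      assert (c 0%nat = - (t * sum_f_R0 (fun j => c (S j) * t ^ j) N)) as Hc by lra.
      rewrite Hc, Rabs_Ropp, Rabs_mult, (Rabs_right t) in Ha by lra.
      assert (H1 : t * (M + 1) <= Rabs (c 0%nat) / 2).
      { apply (Rmult_le_compat_r (M+1)) in Ht2; [|lra]. 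
        replace (Rabs (c 0%nat) / (2 * (M + 1)) * (M + 1)) with (Rabs (c 0%nat) / 2) in Ht2 by (field; lra). lra. }
      rewrite Hc, Rabs_Ropp, Rabs_mult, (Rabs_right t) in H1 by lra.
      assert (t * Rabs (sum_f_R0 (fun j : nat => c (S j) * t ^ j) N) <= t * M) by (apply Rmult_le_compat_l; lra). lra. }
    destruct j as [|j]; auto.
    apply (IH (fun j => c (S j))); [|lia].
    intros t Ht. specialize (H t Ht). rewrite Hdec, H0 in H.
    apply (Rmult_eq_reg_l t); [|lra]. lra.
Qed.

Lemma op_ident (f g : nat -> R) k :
  sum_f_R0 (fun s => INR (S (k - s)) * f (S (k - s)) * g s + f (k - s)%nat * ((INR s + 1/2) * g (S s))) k
  = (INR k + 1/2) * sum_f_R0 (fun s => f (S k - s)%nat * g s) (S k) + 1/2 * f (S k) * g 0%nat.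
Proof.
  rewrite sum_plus.
  assert (A1 : sum_f_R0 (fun s => INR (S (k - s)) * f (S (k - s)) * g s) k
     = sum_f_R0 (fun s => INR (S k - s) * f (S k - s)%nat * g s) (S k)).
  { rewrite tech5. rewrite Nat.sub_diag. simpl (INR 0). rewrite !Rmult_0_l, Rplus_0_r.
    apply sum_eq. intros i Hi. assert (E: (S k - i)%nat = S (k - i)). lia. rewrite E. reflexivity. }
  assert (A2 : sum_f_R0 (fun s => f (k - s)%nat * ((INR s + 1/2) * g (S s))) k - 1/2 * f (S k) * g 0%nat
     = sum_f_R0 (fun s => (INR s - 1/2) * f (S k - s)%nat * g s) (S k)).
  { rewrite (decomp_sum _ (S k)) by lia. simpl pred. rewrite Nat.sub_0_r. simpl (INR 0).
    replace (sum_f_R0 (fun i : nat => (INR (S i) - 1 / 2) * f (S k - S i)%nat * g (S i)) k)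
      with (sum_f_R0 (fun s => f (k - s)%nat * ((INR s + 1/2) * g (S s))) k). ring.
    apply sum_eq. intros i Hi. rewrite S_INR. simpl (S k - S i)%nat. match goal with |- ?a = ?b => change (a = b :> R) end. field. }
  assert (A3 : (INR k + 1/2) * sum_f_R0 (fun s => f (S k - s)%nat * g s) (S k)
     = sum_f_R0 (fun s => INR (S k - s) * f (S k - s)%nat * g s) (S k)
       + sum_f_R0 (fun s => (INR s - 1/2) * f (S k - s)%nat * g s) (S k)).
  { rewrite <- sum_plus, scal_sum. apply sum_eq. intros i Hi.
    assert (INR (S k - i) + INR i = INR k + 1). { rewrite <- plus_INR. replace (S k - i + i)%nat with (S k) by lia. apply S_INR. }
    replace (INR (S k - i)) with (INR k + 1 - INR i) by lra. field. }
  lra.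
Qed.

Definition fF (F : R -> R) m a := Derive_n F m a / INR (fact m).
Definition gX (x : R -> R) s a := Derive_n x s a / poch (1/2) s.
Definition Bk k F x a := Op k F x a - Derive_n F k a / INR (fact k) * x a.

Lemma poch_pos s : 0 < poch (1/2) s.
Proof. induction s; simpl. lra. apply Rmult_lt_0_compat; auto. pose proof (pos_INR s). lra. Qed.

Lemma Op_deriv k F x a :
  (forall m, (m <= k)%nat -> ex_derive (Derive_n F m) a) ->
  (forall s, (s <= k)%nat -> ex_derive (Derive_n x s) a) ->
  is_derive (Op k F x) a ((INR k + 1/2) * Op (S k) F x a + 1/2 * fF F (S k) a * x a).
Proof.
  intros HF Hx.
  assert (E : (INR k + 1/2) * Op (S k) F x a + 1/2 * fF F (S k) a * x a =
    sum_f_R0 (fun s => Derive_n F (S (k - s)) a / INR (fact (k - s)) * / poch (1/2) s * Derive_n x s a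
       + Derive_n F (k - s) a / INR (fact (k - s)) * / poch (1/2) s * Derive_n x (S s) a) k).
  { rewrite (sum_eq _ (fun s => INR (S (k - s)) * fF F (S (k - s)) a * gX x s a + fF F (k - s)%nat a * ((INR s + 1/2) * gX x (S s) a))).
    - rewrite (op_ident (fun m => fF F m a) (fun s => gX x s a)). unfold Op. f_equal. f_equal. apply sum_eq. intros i _. unfold fF, gX. field.
      split. apply Rgt_not_eq, poch_pos. apply INR_fact_neq_0.
      unfold gX. simpl. field.
    - intros i _. unfold fF, gX. change (fact (S (k - i))) with (S (k - i) * fact (k - i))%nat.
      rewrite mult_INR. simpl poch. pose proof (poch_pos i). pose proof (pos_INR i).
      pose proof (INR_fact_neq_0 (k - i)). pose proof (pos_INR (k - i)).
      field. repeat split; try lra. rewrite S_INR; lra. }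
  rewrite E. unfold Op. apply (is_derive_sum (fun s t => Derive_n F (k - s) t / INR (fact (k - s)) * / poch (1 / 2) s * Derive_n x s t)).
  intros s Hs. auto_derive. split. apply HF; lia. split. apply Hx; lia. exact I.
  simpl. rewrite !Rmult_1_l. reflexivity.
Qed.

Lemma B_deriv k F x a :
  (forall m, (m <= S k)%nat -> ex_derive (Derive_n F m) a) ->
  (forall s, (s <= k)%nat -> ex_derive (Derive_n x s) a) ->
  is_derive (Bk k F x) a ((INR k + 1/2) * Bk (S k) F x a - Derive x a * fF F k a).
Proof.
  intros HF Hx.
  pose proof (Op_deriv k F x a (fun m Hm => HF m ltac:(lia)) Hx) as HO.
  unfold Bk. auto_derive.
  - split. eexists; exact HO. split. apply HF; lia. split. apply (Hx 0%nat); lia. exact I.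
  - assert (D1 : Derive (fun t => Op k F x t) a = (INR k + 1/2) * Op (S k) F x a + 1/2 * fF F (S k) a * x a)
      by (apply is_derive_unique; exact HO).
    rewrite D1. unfold fF.
    change (fact (S k)) with (S k * fact k)%nat. rewrite mult_INR.
    change (Derive (fun t => Derive_n F k t) a) with (Derive_n F (S k) a).
    change (Derive (fun t => x t) a) with (Derive x a).
    pose proof (INR_fact_neq_0 k). pose proof (pos_INR k). rewrite S_INR.
    field. lra.
Qed.

Lemma LQ (p : R -> R) (bf : nat -> R -> R) N (e1 e2 : nat -> nat) c a :
  ex_derive p a -> (forall j, (j <= N)%nat -> ex_derive (bf j) a) ->
  is_derive (fun t => sum_f_R0 (fun j => bf j t * (p t) ^ (e1 j) * c ^ (e2 j)) N) a
    (sum_f_R0 (fun j => Derive (bf j) a * (p a) ^ (e1 j) * c ^ (e2 j)) N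
     + Derive p a * sum_f_R0 (fun j => bf j a * (INR (e1 j) * (p a) ^ (pred (e1 j))) * c ^ (e2 j)) N).
Proof.
  intros Hp Hb. rewrite scal_sum, <- sum_plus.
  apply (is_derive_sum (fun j t => bf j t * (p t) ^ (e1 j) * c ^ (e2 j))).
  intros j Hj. auto_derive. split. apply Hb; auto. split; auto.
  simpl. rewrite !Rmult_1_l. 
  change (Derive (fun x => bf j x) a) with (Derive (bf j) a).
  change (Derive (fun x => p x) a) with (Derive p a). ring.
Qed.

Lemma LQc (p : R -> R) (B : nat -> R) N (e1 e2 : nat -> nat) c a :
  ex_derive p a ->
  is_derive (fun t => sum_f_R0 (fun j => B j * (p t) ^ (e1 j) * c ^ (e2 j)) N) a
    (Derive p a * sum_f_R0 (fun j => B j * (INR (e1 j) * (p a) ^ (pred (e1 j))) * c ^ (e2 j)) N).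
Proof.
  intros Hp. rewrite scal_sum.
  apply (is_derive_sum (fun j t => B j * (p t) ^ (e1 j) * c ^ (e2 j))).
  intros j Hj. auto_derive. auto.
  simpl. rewrite !Rmult_1_l. 
  change (Derive (fun x => p x) a) with (Derive p a). ring.
Qed.

Lemma LG (h : R -> R) (A : nat -> R) N (e : nat -> nat) c a :
  ex_derive h a ->
  is_derive (fun t => sum_f_R0 (fun k => A k * (h t) ^ k * c ^ (e k)) N) a
    (Derive h a * sum_f_R0 (fun k => A k * (INR k * (h a) ^ (pred k)) * c ^ (e k)) N).
Proof.
  intros Hh. rewrite scal_sum.
  apply (is_derive_sum (fun k t => A k * (h t) ^ k * c ^ (e k))).
  intros j Hj. auto_derive. auto.
  simpl. rewrite !Rmult_1_l. 
  change (Derive (fun x => h x) a) with (Derive h a). ring.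
Qed.

Lemma LH (p : R -> R) c a : ex_derive p a -> is_derive (fun t => (p t) ^ 2 + t * c) a (2 * p a * Derive p a + c).
Proof. intros H. auto_derive. auto. change (Derive (fun x => p x) a) with (Derive p a). simpl. ring. Qed.

Lemma LS (q g : R -> R) y a dq dg : is_derive q a dq -> is_derive g a dg ->
  is_derive (fun t => q t + y * g t) a (dq + y * dg).
Proof.
  intros Hq Hg. auto_derive. split. eexists; exact Hq. split. eexists; exact Hg. exact I.
  change (Derive (fun x => q x) a) with (Derive q a). change (Derive (fun x => g x) a) with (Derive g a).
  rewrite (is_derive_unique _ _ _ Hq), (is_derive_unique _ _ _ Hg). ring.
Qed.

Definition Qpi (n : nat) (b : nat -> R -> R) (a P py : R) :=
  sum_f_R0 (fun j => b (S j) a * (INR (2 * S j - 1) * P ^ (pred (2 * S j - 1))) * py ^ (2 * (n - S j) + 1)) (n - 1).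
Definition Qbd (n : nat) (b : nat -> R -> R) (a P py : R) :=
  sum_f_R0 (fun j => Derive (b (S j)) a * P ^ (2 * S j - 1) * py ^ (2 * (n - S j) + 1)) (n - 1).
Definition Xs (n : nat) (A : nat -> R) (h py : R) :=
  sum_f_R0 (fun k => A k * (INR k * h ^ (pred k)) * py ^ (2 * (n - k))) n.


Lemma bracket_raw n (A : nat -> R) (b : nat -> R -> R) (x : R -> R) (a y pa py : R)
  (Hx2 : ex_derive (Derive x) a) (Hxd : Derive x a <> 0)
  (Hb : forall j, (j <= n - 1)%nat -> ex_derive (b (S j)) a) :
  pbracket (Ham x) (S1 A b n x) a y pa py =
   py ^ 2 * (a / Derive x a) * Qpi n b a (Pi x a pa) py
   - 2 * Pi x a pa * (a / Derive x a) * Qbd n b a (Pi x a pa) py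
   - 2 * a * py * Gfun A n x a y pa py.
Proof.
  assert (HP : ex_derive (fun t => Pi x t pa) a).
  { unfold Pi. auto_derive. repeat split; auto. }
  set (dP := Derive (fun t => Pi x t pa) a).
  assert (D1 : is_derive (fun t => Ham x t y pa py) a (2 * Pi x a pa * dP + py ^ 2)).
  { exact (LH (fun t => Pi x t pa) (py ^ 2) a HP). }
  assert (HPa : is_derive (fun t => Pi x a t) pa (a / Derive x a)).
  { unfold Pi. auto_derive. auto. ring. }
  assert (D2 : is_derive (fun t => Ham x a y t py) pa (2 * Pi x a pa * (a / Derive x a))).
  { unfold Ham. unfold Pi. auto_derive. auto. ring. }
  assert (D3 : Derive (fun t => Ham x a t pa py) y = 0).
  { rewrite (Derive_ext (fun t => Ham x a t pa py) (fun _ => Ham x a y pa py)) by reflexivity.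
    apply Derive_const. }
  assert (D4 : Derive (fun t => Ham x a y pa t) py = 2 * a * py).
  { apply is_derive_unique. unfold Ham. auto_derive. auto. ring. }
  assert (D5 : Derive (fun t => S1 A b n x a t pa py) y = Gfun A n x a y pa py).
  { apply is_derive_unique.
    apply (is_derive_ext (fun t => Q1 b n x a y pa py + t * Gfun A n x a y pa py)).
    intros; reflexivity. auto_derive. auto. ring. }
  assert (D6 : is_derive (fun t => S1 A b n x t y pa py) a
     (Qbd n b a (Pi x a pa) py + dP * Qpi n b a (Pi x a pa) py
      + y * ((2 * Pi x a pa * dP + py ^ 2) * Xs n A (Ham x a y pa py) py))).
  { rewrite <- (is_derive_unique _ _ _ D1). unfold dP.
    exact (LS (fun t => Q1 b n x t y pa py) (fun t => Gfun A n x t y pa py) y a _ _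
       (LQ (fun t => Pi x t pa) (fun j => b (S j)) (n - 1) (fun j => 2 * S j - 1)%nat
           (fun j => 2 * (n - S j) + 1)%nat py a HP Hb)
       (LG (fun t => Ham x t y pa py) A n (fun k => 2 * (n - k))%nat py a (ex_intro _ _ D1))). }
  assert (D7 : is_derive (fun t => S1 A b n x a y t py) pa
     ((a / Derive x a) * Qpi n b a (Pi x a pa) py
      + y * ((2 * Pi x a pa * (a / Derive x a)) * Xs n A (Ham x a y pa py) py))).
  { rewrite <- (is_derive_unique _ _ _ D2), <- (is_derive_unique _ _ _ HPa).
    exact (LS (fun t => Q1 b n x a y t py) (fun t => Gfun A n x a y t py) y pa _ _
       (LQc (fun t => Pi x a t) (fun j => b (S j) a) (n - 1) (fun j => 2 * S j - 1)%nat
           (fun j => 2 * (n - S j) + 1)%nat py pa (ex_intro _ _ HPa))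
       (LG (fun t => Ham x a y t py) A n (fun k => 2 * (n - k))%nat py pa (ex_intro _ _ D2))). }
  unfold pbracket.
  assert (E1 : Derive (fun t : R => Ham x t y pa py) a = 2 * Pi x a pa * dP + py ^ 2)
    by (apply is_derive_unique; exact D1).
  assert (E2 : Derive (fun t : R => Ham x a y t py) pa = 2 * Pi x a pa * (a / Derive x a))
    by (apply is_derive_unique; exact D2).
  assert (E6 : Derive (fun t : R => S1 A b n x t y pa py) a = Qbd n b a (Pi x a pa) py + dP * Qpi n b a (Pi x a pa) py
      + y * ((2 * Pi x a pa * dP + py ^ 2) * Xs n A (Ham x a y pa py) py))
    by (apply is_derive_unique; exact D6).
  assert (E7 : Derive (fun t : R => S1 A b n x a y t py) pa = (a / Derive x a) * Qpi n b a (Pi x a pa) py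
      + y * ((2 * Pi x a pa * (a / Derive x a)) * Xs n A (Ham x a y pa py) py))
    by (apply is_derive_unique; exact D7).
  rewrite E1, E2, D3, D4, D5, E6, E7.
  ring.
Qed.

Definition Kuv (n : nat) (A : nat -> R) (b : nat -> R -> R) (x : R -> R) (a P py : R) :=
  sum_f_R0 (fun j => b (S j) a * (INR j + 1/2) * (P ^ 2) ^ j * (py ^ 2) ^ (n - j)) (n - 1)
  - sum_f_R0 (fun j => Derive (b (S j)) a * (P ^ 2) ^ (S j) * (py ^ 2) ^ (n - S j)) (n - 1)
  - Derive x a * sum_f_R0 (fun k => A k * (P ^ 2 + a * py ^ 2) ^ k * (py ^ 2) ^ (n - k)) n.

Lemma bracket_K n (A : nat -> R) (b : nat -> R -> R) (x : R -> R) (a y pa py : R) (Hn : (1 <= n)%nat)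
  (Hx2 : ex_derive (Derive x) a) (Hxd : Derive x a <> 0)
  (Hb : forall j, (j <= n - 1)%nat -> ex_derive (b (S j)) a) :
  pbracket (Ham x) (S1 A b n x) a y pa py = 2 * a * py / Derive x a * Kuv n A b x a (Pi x a pa) py.
Proof.
  rewrite bracket_raw by auto.
  set (P := Pi x a pa).
  assert (Q1e : py ^ 2 * Qpi n b a P py =
     2 * py * sum_f_R0 (fun j => b (S j) a * (INR j + 1/2) * (P ^ 2) ^ j * (py ^ 2) ^ (n - j)) (n - 1)).
  { unfold Qpi. rewrite !scal_sum. apply sum_eq. intros j Hj.
    replace (2 * S j - 1)%nat with (S (2 * j)) by lia.
    change (pred (S (2 * j))) with (2 * j)%nat.
    replace (n - j)%nat with (S (n - S j)) by lia.
    replace (2 * (n - S j) + 1)%nat with (S (2 * (n - S j))) by lia.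
    rewrite <- (tech_pow_Rmult py (2 * (n - S j))).
    rewrite (pow_mult P 2 j), (pow_mult py 2 (n - S j)).
    rewrite <- (tech_pow_Rmult (py ^ 2) (n - S j)).
    rewrite S_INR, mult_INR. replace (INR 2) with 2 by (simpl; lra). field. }
  assert (Q2e : P * Qbd n b a P py =
     py * sum_f_R0 (fun j => Derive (b (S j)) a * (P ^ 2) ^ (S j) * (py ^ 2) ^ (n - S j)) (n - 1)).
  { unfold Qbd. rewrite !scal_sum. apply sum_eq. intros j Hj.
    replace (2 * S j - 1)%nat with (S (2 * j)) by lia.
    replace (2 * (n - S j) + 1)%nat with (S (2 * (n - S j))) by lia.
    rewrite <- (tech_pow_Rmult py (2 * (n - S j))), <- (tech_pow_Rmult P (2 * j)).
    rewrite (pow_mult P 2 j), (pow_mult py 2 (n - S j)).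
    rewrite <- (tech_pow_Rmult (P ^ 2) j). ring. }
  assert (Ge : Gfun A n x a y pa py = sum_f_R0 (fun k => A k * (P ^ 2 + a * py ^ 2) ^ k * (py ^ 2) ^ (n - k)) n).
  { unfold Gfun. apply sum_eq. intros k Hk. rewrite pow_mult. reflexivity. }
  unfold Kuv. fold P. rewrite Ge.
  replace (py ^ 2 * (a / Derive x a) * Qpi n b a P py) with (a / Derive x a * (py ^ 2 * Qpi n b a P py)) by ring.
  replace (2 * P * (a / Derive x a) * Qbd n b a P py) with (2 * (a / Derive x a) * (P * Qbd n b a P py)) by ring.
  rewrite Q1e, Q2e. field. auto.
Qed.

Definition bb (n : nat) (b : nat -> R -> R) (j : nat) : R -> R :=
  if andb (Nat.leb 1 j) (Nat.leb j n) then b j else (fun _ => 0).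

Definition coeff n (A : nat -> R) (b : nat -> R -> R) (x : R -> R) j a :=
  (INR j + 1/2) * bb n b (S j) a - Derive (bb n b j) a - Derive x a * (Derive_n (Fpoly A n) j a / INR (fact j)).

Lemma bb_in n b j : (1 <= j <= n)%nat -> bb n b j = b j.
Proof.
  intros H. unfold bb. replace (Nat.leb 1 j) with true by (symmetry; apply Nat.leb_le; lia).
  replace (Nat.leb j n) with true by (symmetry; apply Nat.leb_le; lia). reflexivity.
Qed.

Lemma bb_out n b j : (j = 0 \/ n < j)%nat -> bb n b j = fun _ => 0.
Proof.
  intros H. unfold bb. destruct H as [H|H].
  - subst. reflexivity.
  - replace (Nat.leb j n) with false by (symmetry; apply Nat.leb_gt; lia).
    rewrite Bool.andb_false_r. reflexivity.
Qed.

Lemma G_taylor n (A : nat -> R) a u v : 0 <= u -> 0 < v ->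
  sum_f_R0 (fun k => A k * (u + a * v) ^ k * v ^ (n - k)) n =
  sum_f_R0 (fun j => Derive_n (Fpoly A n) j a / INR (fact j) * u ^ j * v ^ (n - j)) n.
Proof.
  intros Hu Hv.
  assert (E1 : sum_f_R0 (fun k => A k * (u + a * v) ^ k * v ^ (n - k)) n = v ^ n * P n A (a + u / v)).
  { unfold P. rewrite scal_sum. apply sum_eq. intros k Hk.
    replace (u + a * v) with (v * (a + u / v)) by (field; lra).
    rewrite Rpow_mult_distr. replace (v ^ n) with (v ^ k * v ^ (n - k)).
    ring. rewrite <- pow_add. f_equal. lia. }
  rewrite E1. rewrite taylorP. 2: { apply Rdiv_le_0_compat; lra. }
  rewrite scal_sum. apply sum_eq. intros j Hj.
  change (Fpoly A n) with (P n A).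
  replace (v ^ n) with (v ^ j * v ^ (n - j)) by (rewrite <- pow_add; f_equal; lia).
  replace (u ^ j) with ((u / v) ^ j * v ^ j).
  ring. rewrite <- Rpow_mult_distr. f_equal. field. lra.
Qed.

Lemma K_coeff n A b x a P0 py (Hn : (1 <= n)%nat) (Hpy : py <> 0) :
  Kuv n A b x a P0 py = sum_f_R0 (fun j => coeff n A b x j a * (P0 ^ 2) ^ j * (py ^ 2) ^ (n - j)) n.
Proof.
  set (u := P0 ^ 2). set (v := py ^ 2).
  assert (Hu : 0 <= u) by (unfold u; apply pow2_ge_0).
  assert (Hv : 0 < v) by (unfold v; apply pow2_gt_0; auto).
  destruct n as [|m]; [lia|]. replace (S m - 1)%nat with m by lia.
  assert (S1e : sum_f_R0 (fun j => b (S j) a * (INR j + 1/2) * u ^ j * v ^ (S m - j)) m =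
     sum_f_R0 (fun j => (INR j + 1/2) * bb (S m) b (S j) a * u ^ j * v ^ (S m - j)) (S m)).
  { rewrite tech5. rewrite (bb_out (S m) b (S (S m))) by lia. rewrite Rmult_0_r, Rmult_0_l, Rmult_0_l, Rplus_0_r.
    apply sum_eq. intros j Hj. rewrite bb_in by lia. ring. }
  assert (S2e : sum_f_R0 (fun j => Derive (b (S j)) a * u ^ (S j) * v ^ (S m - S j)) m =
     sum_f_R0 (fun j => Derive (bb (S m) b j) a * u ^ j * v ^ (S m - j)) (S m)).
  { rewrite (decomp_sum _ (S m)) by lia. simpl pred. rewrite (bb_out (S m) b 0) by lia.
    rewrite Derive_const, !Rmult_0_l, Rplus_0_l.
    apply sum_eq. intros j Hj. rewrite bb_in by lia. reflexivity. }
  unfold Kuv. fold u v. replace (S m - 1)%nat with m by lia. rewrite S1e. rewrite S2e. rewrite G_taylor by auto.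
  rewrite scal_sum, <- !minus_sum. apply sum_eq. intros j Hj. unfold coeff. ring.
Qed.

Lemma Derive_plus_const (f : R -> R) c t : Derive (fun u => f u + c) t = Derive f t.
Proof.
  unfold Derive. f_equal. apply Lim_ext. intros h. unfold Rdiv. ring.
Qed.

Lemma Derive_n_plus_const (f : R -> R) c s t : Derive_n (fun u => f u + c) (S s) t = Derive_n f (S s) t.
Proof.
  revert t. induction s as [|s IH]; intros t.
  - simpl. exact (Derive_plus_const f c t).
  - simpl Derive_n at 1. rewrite (Derive_ext _ (Derive_n f (S s))) by (intros; apply IH). reflexivity.
Qed.

Lemma Op_plus_const k F (x : R -> R) c a :
  Op k F (fun t => x t + c) a = Op k F x a + Derive_n F k a / INR (fact k) * c.
Proof.
  unfold Op. destruct k as [|k].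
  - simpl. field.
  - rewrite !(decomp_sum _ (S k)) by lia. simpl pred.
    rewrite (sum_eq (fun i => Derive_n F (S k - S i) a / INR (fact (S k - S i)) * / poch (1 / 2) (S i) *
        Derive_n (fun t : R => x t + c) (S i) a)
       (fun i => Derive_n F (S k - S i) a / INR (fact (S k - S i)) * / poch (1 / 2) (S i) *
        Derive_n x (S i) a)).
    + rewrite Nat.sub_0_r. simpl (poch (1/2) 0). simpl (Derive_n _ 0 a). field. apply INR_fact_neq_0.
    + intros i _. rewrite Derive_n_plus_const. reflexivity.
Qed.

Lemma inI_between l r a b t : inI l r a -> inI l r b -> Rmin a b <= t <= Rmax a b -> inI l r t.
Proof.
  unfold inI. intros [Ha1 Ha2] [Hb1 Hb2] [Ht1 Ht2].
  destruct (Rle_dec a b) as [H|H].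
  - rewrite Rmin_left in Ht1 by lra. rewrite Rmax_right in Ht2 by lra.
    split. lra. destruct r; simpl in *; auto; lra.
  - rewrite Rmin_right in Ht1 by lra. rewrite Rmax_left in Ht2 by lra.
    split. lra. destruct r; simpl in *; auto; lra.
Qed.

Lemma const_on_I l r (f : R -> R) :
  (forall a, inI l r a -> is_derive f a 0) -> forall a b, inI l r a -> inI l r b -> f a = f b.
Proof.
  intros Hd a b Ha Hb.
  destruct (MVT_gen f a b (fun _ => 0)) as [c [_ Hc]].
  - intros t Ht. apply Hd. apply (inI_between l r a b); auto. lra.
  - intros t Ht. apply continuity_pt_filterlim.
    assert (Hc : ex_derive f t) by (eexists; apply Hd; apply (inI_between l r a b); auto).
    exact (ex_derive_continuous f t Hc).
  - lra.
Qed.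

Lemma inI_ne l r : Rbar_lt (Finite l) r -> exists a, inI l r a.
Proof.
  intros H. destruct r as [r'| |]; simpl in H.
  - exists ((l + r') / 2). unfold inI; simpl; lra.
  - exists (l + 1). unfold inI; simpl; split; auto; lra.
  - contradiction.
Qed.

Theorem proposition5
  (n : nat) (hn : (2 <= n)%nat)
  (A : nat -> R) (hAn : A n = 1)
  (l : R) (r : Rbar) (hl : 0 <= l) (hlr : Rbar_lt (Finite l) r)
  (x : R -> R)
  (hx : forall (m : nat) (a : R), inI l r a -> ex_derive_n x m a)
  (hxd : forall a : R, inI l r a -> Derive x a <> 0)
  (b : nat -> R -> R)
  (hb : forall (k m : nat) (a : R), (1 <= k <= n)%nat -> inI l r a -> ex_derive_n (b k) m a) :
  (forall a y pa py : R, inI l r a ->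
      pbracket (Ham x) (S1 A b n x) a y pa py = 0)
  <->
  ((forall (k : nat) (a : R), (1 <= k <= n)%nat -> inI l r a ->
      b k a = Op k (Fpoly A n) x a - Derive_n (Fpoly A n) k a / INR (fact k) * x a)
   /\
   (exists c : R, forall a : R, inI l r a ->
      Op n (Fpoly A n) (fun t => x t + c) a = 0)).
Proof.
  set (F := Fpoly A n).
  assert (HFex : forall m t, (m <= S n)%nat -> ex_derive (Derive_n F m) t).
  { intros m t Hm. destruct (Nat.eq_dec m (S n)) as [->|Hne].
    - exists 0. apply (is_derive_ext (fun _ => 0)).
      + intros u. symmetry. exact (polyD_over n A u).
      + auto_derive; auto.
    - exact (polyD_ex n A m t ltac:(lia)). }
  assert (HFtop : forall t, Derive_n F n t / INR (fact n) = 1).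
  { intros t. unfold F. change (Fpoly A n) with (P n A). rewrite polyD_top, hAn.
    field. apply INR_fact_neq_0. }
  assert (HFover : forall t, Derive_n F (S n) t / INR (fact (S n)) = 0).
  { intros t. unfold F. change (Fpoly A n) with (P n A). rewrite polyD_over. unfold Rdiv. ring. }
  assert (Hxs : forall s a, inI l r a -> ex_derive (Derive_n x s) a).
  { intros s a Ha. exact (hx (S s) a Ha). }
  assert (Hx2 : forall a, inI l r a -> ex_derive (Derive x) a).
  { intros a Ha. exact (hx 2%nat a Ha). }
  assert (Hbex : forall j a, (j <= n - 1)%nat -> inI l r a -> ex_derive (b (S j)) a).
  { intros j a Hj Ha. exact (hb (S j) 1%nat a ltac:(lia) Ha). }
  assert (Hpos : forall a, inI l r a -> 0 < a).
  { intros a [Ha _]. lra. }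
  assert (HBd : forall k a, (k <= n)%nat -> inI l r a ->
     Derive (Bk k F x) a = (INR k + 1/2) * Bk (S k) F x a - Derive x a * fF F k a).
  { intros k a Hk Ha. apply is_derive_unique. apply B_deriv.
    intros m Hm. apply HFex. lia. intros s _. apply Hxs; auto. }
  assert (HOd : forall a, inI l r a -> Derive (Op n F x) a = (INR n + 1/2) * Op (S n) F x a).
  { intros a Ha. rewrite (is_derive_unique _ _ _ (Op_deriv n F x a (fun m Hm => HFex m a ltac:(lia))
       (fun s _ => Hxs s a Ha))).
    unfold fF. rewrite HFover. ring. }
  assert (Hcoef : (forall j t, (j <= n)%nat -> inI l r t -> bb n b j t = Bk j F x t) ->
     forall a, inI l r a ->
       (forall j, (j < n)%nat -> coeff n A b x j a = 0) /\
       coeff n A b x n a = - (INR n + 1/2) * Op (S n) F x a).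
  { intros HB a Ha.
    assert (HDe : forall j, (j <= n)%nat -> Derive (bb n b j) a = Derive (Bk j F x) a).
    { intros j Hj. apply Derive_ext_loc. eapply filter_imp; [|apply (loc_I l r a Ha)].
      intros t Ht. apply HB; auto. }
    split.
    - intros j Hj. unfold coeff. fold F. rewrite HDe by lia. rewrite HBd by (auto; lia).
      rewrite HB by (auto; lia). unfold fF. ring.
    - unfold coeff. fold F. rewrite HDe by lia. rewrite HBd by (auto; lia).
      rewrite (bb_out n b (S n)) by lia. unfold Bk. fold F. unfold fF. rewrite HFtop.
      replace (Derive_n F (S n) a / INR (fact (S n)) * x a) with 0
        by (rewrite HFover; ring).
      ring. }
  assert (HB0 : forall t, Bk 0 F x t = 0).
  { intros t. unfold Bk, Op. simpl. field. }
  split.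
  - intros H.
    assert (Hc0 : forall a, inI l r a -> forall j, (j <= n)%nat -> coeff n A b x j a = 0).
    { intros a Ha. apply poly_zero_pos. intros u Hu.
      specialize (H a 0 (sqrt u * Derive x a / a) 1 Ha).
      pose proof (hxd a Ha) as Hd. pose proof (Hpos a Ha) as Hap.
      rewrite bracket_K in H by (auto; try lia; intros; apply Hbex; auto).
      rewrite K_coeff in H by (auto; lia).
      assert (Hpi : Pi x a (sqrt u * Derive x a / a) ^ 2 = u).
      { unfold Pi. replace (a / Derive x a * (sqrt u * Derive x a / a)) with (sqrt u) by (field; lra).
        apply pow2_sqrt. lra. }
      rewrite Hpi in H.
      apply Rmult_integral in H. destruct H as [H|H].
      - exfalso. assert (2 * a * 1 / Derive x a <> 0).
        { unfold Rdiv. apply Rmult_integral_contrapositive. split. lra. apply Rinv_neq_0_compat. auto. }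
        auto.
      - rewrite <- H. apply sum_eq. intros j _. rewrite pow1, pow1. ring. }
    assert (HB : forall j t, (j <= n)%nat -> inI l r t -> bb n b j t = Bk j F x t).
    { intros j. induction j as [|j IH]; intros t Hj Ht.
      - rewrite (bb_out n b 0) by lia. rewrite HB0. reflexivity.
      - pose proof (Hc0 t Ht j ltac:(lia)) as Hc. unfold coeff in Hc. fold F in Hc.
        assert (HDe : Derive (bb n b j) t = Derive (Bk j F x) t).
        { apply Derive_ext_loc. eapply filter_imp; [|apply (loc_I l r t Ht)].
          intros u Hu. apply IH; auto; lia. }
        rewrite HDe, HBd in Hc by (auto; lia). unfold fF in Hc.
        pose proof (pos_INR j).
        apply (Rmult_eq_reg_l (INR j + 1/2)); [|lra]. lra. }
    split.
    + intros k a Hk Ha. rewrite <- (bb_in n b k) by lia. rewrite HB by (auto; lia). reflexivity.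
    + destruct (inI_ne l r hlr) as [a0 Ha0].
      exists (- Op n F x a0). intros a Ha.
      rewrite Op_plus_const. fold F. rewrite HFtop.
      assert (HOz : forall t, inI l r t -> is_derive (Op n F x) t 0).
      { intros t Ht. pose proof (Hcoef HB t Ht) as [_ Hn]. rewrite (Hc0 t Ht n) in Hn by lia.
        pose proof (pos_INR n).
        assert (Op (S n) F x t = 0) as Hz.
        { apply (Rmult_eq_reg_l (- (INR n + 1/2))); lra. }
        pose proof (Op_deriv n F x t (fun m Hm => HFex m t ltac:(lia)) (fun s _ => Hxs s t Ht)) as HO.
        unfold fF in HO. rewrite HFover, Hz in HO.
        replace ((INR n + 1 / 2) * 0 + 1 / 2 * 0 * x t) with 0 in HO by ring. exact HO. }
      rewrite (const_on_I l r (Op n F x) HOz a a0 Ha Ha0). ring.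
  - intros [H1 [c H2]].
    assert (HB : forall j t, (j <= n)%nat -> inI l r t -> bb n b j t = Bk j F x t).
    { intros j t Hj Ht. destruct j as [|j].
      - rewrite (bb_out n b 0) by lia. rewrite HB0. reflexivity.
      - rewrite bb_in by lia. apply H1; auto; lia. }
    intros a y pa py Ha.
    pose proof (hxd a Ha) as Hd.
    rewrite bracket_K by (auto; try lia; intros; apply Hbex; auto).
    destruct (Req_dec py 0) as [->|Hpy].
    { unfold Rdiv. ring. }
    rewrite K_coeff by (auto; lia).
    destruct (Hcoef HB a Ha) as [Hlt Hn].
    assert (Hz : Op (S n) F x a = 0).
    { assert (HOc : Derive (Op n F x) a = 0).
      { rewrite (Derive_ext_loc _ (fun _ => - c)). apply Derive_const.
        eapply filter_imp; [|apply (loc_I l r a Ha)].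
        intros t Ht. pose proof (H2 t Ht) as E. rewrite Op_plus_const in E. fold F in E.
        rewrite HFtop in E. lra. }
      rewrite HOd in HOc by auto. pose proof (pos_INR n).
      apply (Rmult_eq_reg_l (INR n + 1/2)); lra. }
    rewrite Hz in Hn.
    rewrite (sum_eq _ (fun _ => 0)). 
    + rewrite sum_cte. ring.
    + intros j Hj. destruct (Nat.eq_dec j n) as [->|Hne].
      * rewrite Hn. ring.
      * rewrite Hlt by lia. ring.
Qed.
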